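(* Let $(\mathcal{E},\Sigma,\partial,\mathcal{M})$ be a decoding problem with fault distance $d$, let $\mathcal{E}=C_1\sqcup\dots\sqcup C_n$ be a partition into commit regions processed in the order $1,\dots,n$, and for each $i$ let $B_i\subseteq \mathcal{E}\setminus(P_i\cup C_i)$ be a buffer region, where $P_i$, $F_i$, $\Sigma_{V_i}$ and $\partial_{V_i}$ are as defined in the context. Run the modular decoding procedure described in the context. Assume that for every $i$: 1. (Local decoder soundness) whenever the input syndrome $s=\partial_{V_i}(\kappa_{P_i}+\epsilon)$ satisfies $s=\partial_{V_i}\eta$ for some $\eta\subseteq C_i\cup B_i$ with $|\eta|<d/2$, the local decoder for task $i$ returns some $\mu_i\subseteq C_i\cup B_i$ with $\partial_{V_i}\mu_i=s$ and $|\mu_i|\le|\mu'|$ for every $\mu'\subseteq C_i\cup B_i$ with $\partial_{V_i}\mu'=s$; 2. (Buffering condition) every connected error $\eta\in\mathbb{Z}_2^{\mathcal{E}}$ such that $\eta\subseteq C_i\cup B_i$, $\partial_{V_i}\eta=0$, $\eta\cap C_i\neq\emptyset$ and $\partial\eta\neq 0$ has weight $|\eta|\ge d$. Then for every physical error $\epsilon\in\mathbb{Z}_2^{\mathcal{E}}$ with $|\epsilon|<d/2$: no task aborts, and the global correction $\kappa=\sum_{i=1}^n\kappa_i$ satisfies $\partial\kappa=\partial\epsilon$ and $|\kappa|\le|\epsilon|$. Consequently $\kappa$ is a minimum-weight correction for the syndrome $\partial\epsilon$ (i.e. $|\kappa|\le|\kappa'|$ for all $\kappa'$ with $\partial\kappa'=\partial\epsilon$),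 and $\kappa_{\mathcal{M}}=\epsilon_{\mathcal{M}}$.
   Context: Setting. $\mathcal{E}$ is a finite set of elementary error generators and $\Sigma$ a finite set of check generators. Errors are elements of $\mathbb{Z}_2^{\mathcal{E}}$, identified with subsets of $\mathcal{E}$ via indicator vectors; addition is symmetric difference, and for $\eta\in\mathbb{Z}_2^{\mathcal E}$ and $A\subseteq\mathcal{E}$, $\eta_A:=\eta\cap A$. The weight $|\eta|$ is the cardinality of $\eta$. There is a linear syndrome map $\partial:\mathbb{Z}_2^{\mathcal{E}}\to\mathbb{Z}_2^{\Sigma}$; $\eta$ is undetectable if $\partial\eta=0$. $\mathcal{M}$ is a set of logical outcomes, and each error $\eta$ has a linear logical effect $\eta_{\mathcal{M}}\in\mathbb{Z}_2^{\mathcal{M}}$ (linear in $\eta$). The fault distance $d$ is the minimum weight of an error $\eta$ with $\partial\eta=0$ and $\eta_{\mathcal{M}}\neq0$. Connectedness. Two generators $e_1,e_2\in\mathcal{E}$ are directly connected if there is $\sigma\in\Sigma$ with $\partial e_1(\sigma)=\partial e_2(\sigma)=1$. An error $\eta$ (as a set) is connected if it is connected under this adjacency relation; its connected components are the maximal connected subsets. Modular decoding. Commit regions $C_1,\dots,C_n$ partition $\mathcal{E}$ and are processed in the order $1,\dots,n$. For task $i$: the past is $P_i:=C_1\cup\dots\cup C_{i-1}$; the buffer is $B_i\subseteq\mathcal{E}\setminus(P_i\cup C_i)$; the future is $F_i:=\mathcal{E}\setminus(P_i\cup C_i\cup B_i)$. The visible checks are $\Sigma_{V_i}:=\{\sigma\in\Sigma:\partial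 f(\sigma)=0\ \text{for all } f\in F_i\}$, and $\partial_{V_i}\eta$ denotes the restriction of $\partial\eta$ to $\Sigma_{V_i}$. Let $\kappa_{P_i}:=\kappa_1+\dots+\kappa_{i-1}$ (with $\kappa_{P_1}=0$). Task $i$ is given the syndrome $s_i=\partial_{V_i}(\kappa_{P_i}+\epsilon)$ and a local decoder returns a correction estimate $\mu_i\subseteq C_i\cup B_i$ with $\partial_{V_i}\mu_i=s_i$ (the task aborts if no such $\mu_i$ exists); the committed correction is $\kappa_i:=\mu_i\cap C_i$. The global correction is $\kappa:=\kappa_1+\dots+\kappa_n$. *)

(* Defs.v *)
From mathcomp Require Import all_boot.
Set Implicit Arguments. Unset Strict Implicit. Unset Printing Implicit Defensive.

Section Decoding.
Variables (E Sig M : finType).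
(* D e s = true  iff  (partial e)(s) = 1 : the syndrome map on generators *)
Variable D : E -> Sig -> bool.
(* L e m = true iff the logical effect of generator e flips outcome m *)
Variable L : E -> M -> bool.

(* errors = subsets of E; addition = symmetric difference *)
Definition symd (A B : {set E}) : {set E} := (A :\: B) :|: (B :\: A).

Definition syn (eta : {set E}) : {set Sig} :=
  [set s | odd #|[set e in eta | D e s]|].

Definition logeff (eta : {set E}) : {set M} :=
  [set m | odd #|[set e in eta | L e m]|].

Definition is_fault_distance (d : nat) : Prop :=
  (exists eta : {set E}, syn eta = set0 /\ logeff eta != set0 /\ #|eta| = d) /\
  (forall eta : {set E}, syn eta = set0 -> logeff eta != set0 -> d <= #|eta|).

Definition adj (e1 e2 : E) : bool := [exists s, D e1 s && D e2 s].
Definition connected_err (eta : {set E}) : Prop :=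
  forall x y, x \in eta -> y \in eta ->
    connect [rel a b | [&& a \in eta, b \in eta & adj a b]] x y.

(* commit regions C 0, ..., C (n-1) (0-indexed), buffers B i *)
Variables (C B : nat -> {set E}).
Definition past (i : nat) : {set E} := \bigcup_(j < i) C j.
Definition future (i : nat) : {set E} := ~: (past i :|: C i :|: B i).
Definition visible (i : nat) : {set Sig} :=
  [set s | [forall f in future i, ~~ D f s]].
Definition synV (i : nat) (eta : {set E}) : {set Sig} := syn eta :&: visible i.

(* local decoder for task i: input syndrome (on visible checks) ->
   correction estimate, or None (abort) *)
Variable dec : nat -> {set Sig} -> option {set E}.

(* kapP eps k = Some kappa_{P_k} = kappa_0 + ... + kappa_{k-1} if none of
   tasks 0..k-1 aborted, None otherwise *)
Fixpoint kapP (eps : {set E}) (k : nat) : option {set E} :=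
  match k with
  | 0 => Some set0
  | k'.+1 =>
    match kapP eps k' with
    | None => None
    | Some K =>
      match dec k' (synV k' (symd K eps)) with
      | None => None
      | Some mu => Some (symd K (mu :&: C k'))
      end
    end
  end.

End Decoding.

(* Main.v *)
Require Import Defs.
From mathcomp Require Import all_boot zify.
Set Implicit Arguments. Unset Strict Implicit. Unset Printing Implicit Defensive.

Lemma in_symd (T : finType) (A B : {set T}) x :
  (x \in symd A B) = (x \in A) (+) (x \in B).
Proof. by rewrite /symd !inE; case: (x \in A); case: (x \in B). Qed.

Lemma card_sumE (T : finType) (A : {set T}) : #|A| = \sum_x (x \in A : nat).
Proof. by rewrite -sum1_card big_mkcond; apply: eq_bigr => x _; case: (x \in A). Qed.

Lemma odd_card_symd (T : finType) (A B : {set T}) :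
  odd #|symd A B| = odd #|A| (+) odd #|B|.
Proof.
have -> : #|symd A B| = #|A :\: B| + #|B :\: A|.
  rewrite /symd cardsU.
  have -> : (A :\: B) :&: (B :\: A) = set0.
    by apply/setP => x; rewrite !inE; case: (x \in A); case: (x \in B).
  by rewrite cards0 subn0.
rewrite -(cardsID B A) -(cardsID A B) setIC !oddD.
by case: (odd #|A :\: B|); case: (odd #|B :\: A|); case: (odd #|B :&: A|).
Qed.

Lemma par_symd (T : finType) (P : pred T) (A B : {set T}) :
  odd #|[set e in symd A B | P e]| =
  odd #|[set e in A | P e]| (+) odd #|[set e in B | P e]|.
Proof.
rewrite -odd_card_symd.
have -> : [set e in symd A B | P e] = symd [set e in A | P e] [set e in B | P e]; last by [].
apply/setP => x.
by rewrite in_symd !inE; case: (P x); case: (x \in A); case: (x \in B).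
Qed.

Lemma card_symd_le (T : finType) (A B : {set T}) : #|symd A B| <= #|A| + #|B|.
Proof.
rewrite !card_sumE -big_split /=; apply: leq_sum => x _.
by rewrite in_symd; case: (x \in A); case: (x \in B).
Qed.


Lemma syn_symd (E Sig : finType) (D : E -> Sig -> bool) A B : syn D (symd A B) = symd (syn D A) (syn D B).
Proof. by apply/setP => s; rewrite in_symd !in_set par_symd. Qed.

Lemma logeff_symd (E M : finType) (L : E -> M -> bool) A B : logeff L (symd A B) = symd (logeff L A) (logeff L B).
Proof. by apply/setP => s; rewrite in_symd !in_set par_symd. Qed.

Lemma synV_symd (E Sig : finType) (D : E -> Sig -> bool) C B i A A' :
  synV D C B i (symd A A') = symd (synV D C B i A) (synV D C B i A').
Proof.
apply/setP => s; rewrite /synV syn_symd in_setI !in_symd !in_setI.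
by case: (s \in visible D C B i); case: (s \in syn D A); case: (s \in syn D A').
Qed.

Lemma syn0 (E Sig : finType) (D : E -> Sig -> bool) : syn D set0 = set0.
Proof. by apply/setP => s; rewrite !inE; apply/negP; rewrite (_ : [set e in set0 | _] = set0) ?cards0 //; apply/setP => x; rewrite !inE. Qed.

Lemma kapP_syn (E Sig : finType) (D : E -> Sig -> bool) C B dec eps eps' k : syn D eps = syn D eps' ->
  kapP D C B dec eps k = kapP D C B dec eps' k.
Proof.
move=> He; elim: k => //= k ->.
case: (kapP D C B dec eps' k) => // K.
by rewrite !synV_symd /synV He.
Qed.

Definition relE (E Sig : finType) (D : E -> Sig -> bool) (eta : {set E}) : rel E :=
  [rel a b | [&& a \in eta, b \in eta & adj D a b]].

Lemma adjC (E Sig : finType) (D : E -> Sig -> bool) a b : adj D a b = adj D b a.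
Proof. by apply/existsP/existsP => -[s /andP[h1 h2]]; exists s; rewrite h1 h2. Qed.

Lemma relE_sym (E Sig : finType) (D : E -> Sig -> bool) eta : symmetric (relE D eta).
Proof. by move=> a b; rewrite /relE /= adjC andbCA. Qed.

Lemma path_in (E Sig : finType) (D : E -> Sig -> bool) (eta : {set E}) p x : path (relE D eta) x p -> all (mem eta) p.
Proof. by elim: p x => //= y p IH x /andP[/and3P[_ -> _] /IH]. Qed.

Lemma connect_in (E Sig : finType) (D : E -> Sig -> bool) (eta : {set E}) c x : c \in eta -> connect (relE D eta) c x -> x \in eta.
Proof.
move=> hc /connectP[p pth ->].
have := mem_last c p; rewrite in_cons => /orP[/eqP -> // |].
by move/(allP (path_in pth)).
Qed.

Lemma closed_par (E Sig : finType) (D : E -> Sig -> bool) (eta : {set E}) (T : {set E}) s e : T \subset eta ->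
  (forall x y, x \in T -> y \in eta -> adj D x y -> y \in T) ->
  e \in T -> D e s -> [set e in T | D e s] = [set e in eta | D e s].
Proof.
move=> sT clT eT De; apply/setP => x; rewrite !inE.
case Dx: (D x s); rewrite ?andbF ?andbT //.
apply/idP/idP; first by move/(subsetP sT).
move=> xe; apply: (clT e) => //.
by apply/existsP; exists s; rewrite De Dx.
Qed.

Lemma comp_connected (E Sig : finType) (D : E -> Sig -> bool) (eta : {set E}) c : c \in eta ->
  connected_err D [set x | connect (relE D eta) c x].
Proof.
move=> hc x y; rewrite !inE => cx cy.
have xy : connect (relE D eta) x y.
  by apply: connect_trans _ cy; rewrite (sym_connect_sym (relE_sym D eta)).
case/connectP: xy => p pth ->; apply/connectP; exists p => //.
elim: p x cx pth {cy} => //= z p IH x cx /andP[rxz pth].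
have cz : connect (relE D eta) c z := connect_trans cx (connect1 rxz).
rewrite IH // andbT !inE cx cz /=.
by case/and3P: rxz.
Qed.


Lemma disjP (T : finType) (A B : {set T}) :
  reflect (forall x, x \in A -> x \in B -> False) [disjoint A & B].
Proof.
rewrite disjoints_subset; apply: (iffP subsetP) => h x xA.
  by move=> xB; have := h x xA; rewrite inE xB.
by rewrite inE; apply/negP; exact: h x xA.
Qed.

Lemma invariant (E Sig : finType) (D : E -> Sig -> bool) (d n : nat) (C B : nat -> {set E})
  (dec : nat -> {set Sig} -> option {set E}) :
  (forall i j, i < n -> j < n -> i != j -> [disjoint C i & C j]) ->
  (forall i, i < n -> [disjoint B i & past C i :|: C i]) ->
  (forall (eps : {set E}) i K, i < n -> kapP D C B dec eps i = Some K ->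
     let s := synV D C B i (symd K eps) in
     (exists2 eta : {set E}, eta \subset C i :|: B i & 2 * #|eta| < d /\ synV D C B i eta = s) ->
     exists mu : {set E}, [/\ dec i s = Some mu, mu \subset C i :|: B i,
                    synV D C B i mu = s &
                    forall mu' : {set E}, mu' \subset C i :|: B i -> synV D C B i mu' = s ->
                                #|mu| <= #|mu'|]) ->
  (forall i, i < n -> forall eta : {set E},
     connected_err D eta -> eta \subset C i :|: B i -> synV D C B i eta = set0 ->
     eta :&: C i != set0 -> syn D eta != set0 -> d <= #|eta|) ->
  forall eps : {set E}, 2 * #|eps| < d ->
  forall i, i <= n -> exists K rho : {set E}, [/\ kapP D C B dec eps i = Some K,
     [disjoint rho & past C i], syn D rho = syn D (symd K eps) & #|K| + #|rho| <= #|eps|].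
Proof.
move=> disjC disjB hsound hbuf eps Heps.
elim=> [_|i IH Hi].
  exists set0, eps; split => //.
  - by apply/disjP => x _; rewrite /past big_ord0 inE.
  - have -> : symd set0 eps = eps by apply/setP => x; rewrite in_symd inE.
    by [].
  - by rewrite cards0.
have Hi0 : i <= n by apply: ltnW.
have [K [rho [Hk Hdisj Hsyn Hcard]]] := IH Hi0.
have CP : [disjoint C i & past C i].
  apply/disjP => x xC /bigcupP[j _ xj].
  have hj : j < n by apply: ltn_trans (ltn_ord j) Hi.
  have ne : i != j by rewrite neq_ltn ltn_ord orbT.
  by move: (disjC _ _ Hi hj ne) => /disjP /(_ x xC); apply.
have hB := disjB i Hi.
have CBx : forall x, x \in C i -> x \in B i -> False.
  by move=> x xC xB; move/disjP: hB => /(_ x xB); apply; rewrite inE xC orbT.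
have BPx : forall x, x \in B i -> x \in past C i -> False.
  by move=> x xB xP; move/disjP: hB => /(_ x xB); apply; rewrite inE xP.
have CPx : forall x, x \in C i -> x \in past C i -> False.
  by move=> x xC xP; move/disjP: CP => /(_ x xC); apply.
have rP : forall x, x \in rho -> x \in past C i -> False.
  by move=> x xr xP; move/disjP: Hdisj => /(_ x xr); apply.
set s := synV D C B i (symd K eps).
set rCB := rho :&: (C i :|: B i).
have HsV : s = synV D C B i rCB.
  apply/setP => t; rewrite /s /synV !in_setI -Hsyn.
  case vt: (t \in visible D C B i); rewrite ?andbF ?andbT //.
  rewrite /syn !in_set.
  have -> : [set e in rho | D e t] = [set e in rCB | D e t]; last by [].
  apply/setP => x; rewrite !inE.
  case Dx: (D x t); rewrite ?andbF ?andbT //.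
  case xr: (x \in rho) => //=.
  move: vt; rewrite inE => /forall_inP /(_ x) h.
  apply/esym/negPn/negP => nCB.
  have xf : x \in future C B i.
    rewrite /future !inE; apply/negP => /orP[/orP[xp|xc]|xb].
    - exact: rP xp.
    - by move: nCB; rewrite xc.
    - by move: nCB; rewrite xb orbT.
  by move: (h xf); rewrite Dx.
have rsub : rCB \subset C i :|: B i := subsetIr _ _.
have rcard : #|rCB| <= #|rho| := subset_leq_card (subsetIl _ _).
have r2 : 2 * #|rCB| < d by lia.
have /= := hsound eps i K Hi Hk.
rewrite -/s; case.
  by exists rCB => //; split.
move=> mu [Hdec Hmu HsVmu Hmin].
have mrho : #|mu| <= #|rCB| := Hmin rCB rsub (esym HsV).
set eta := symd mu rCB.
have heta x : (x \in eta) = (x \in mu) (+) ((x \in rho) && ((x \in C i) || (x \in B i))).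
  by rewrite in_symd !inE.
have etasub : eta \subset C i :|: B i.
  apply/subsetP => x; rewrite heta; move: (subsetP Hmu x); rewrite !inE.
  by case: (x \in mu); case: (x \in rho); case: (x \in C i); case: (x \in B i).
have etaV : synV D C B i eta = set0.
  by rewrite synV_symd HsVmu -HsV; apply/setP => t; rewrite in_symd addbb inE.
have etacard : #|eta| < d.
  have := card_symd_le mu rCB; rewrite -/eta; lia.
clearbody eta.
set G := fun c => [set x | connect (relE D eta) c x].
have Gsub : forall c, c \in eta -> G c \subset eta.
  by move=> c ce; apply/subsetP => x; rewrite inE; exact: connect_in ce.
have clG : forall c x y, c \in eta -> x \in G c -> y \in eta -> adj D x y -> y \in G c.
  move=> c x y ce; rewrite !inE => cx ye axy.
  apply: (connect_trans cx); apply: connect1.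
  by rewrite /relE /= (connect_in ce cx) ye axy.
have hG : forall c, c \in eta -> c \in C i -> syn D (G c) = set0.
  move=> c ce cC; case: (eqVneq (syn D (G c)) set0) => // hne.
  have GV : synV D C B i (G c) = set0.
    apply/setP => t; rewrite /synV in_setI in_set0.
    case vt: (t \in visible D C B i); rewrite ?andbF ?andbT //.
    rewrite /syn in_set.
    case: (pickP [pred x | (x \in G c) && D x t]) => [e /andP[eG De] | none].
      rewrite (closed_par (Gsub c ce) (fun x y => clG c x y ce) eG De).
      have : t \notin synV D C B i eta by rewrite etaV inE.
      by move/negbTE; rewrite /synV in_setI vt andbT /syn in_set.
    have -> : [set x in G c | D x t] = set0.
      by apply/setP => x; rewrite in_set in_set0; exact: none x.
    by rewrite cards0.
  have := hbuf i Hi (G c) (comp_connected ce) (subset_trans (Gsub c ce) etasub) GV _ hne.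
  have -> : G c :&: C i != set0.
    by apply/set0Pn; exists c; rewrite !inE connect0 cC.
  have := subset_leq_card (Gsub c ce); lia.
set S := [set x | [exists c, [&& c \in eta, c \in C i & connect (relE D eta) c x]]].
have Ssub : S \subset eta.
  apply/subsetP => x; rewrite inE => /existsP[c /and3P[ce _ cx]].
  exact: connect_in ce cx.
have SC : forall x, x \in C i -> x \in eta -> x \in S.
  by move=> x xC xe; rewrite inE; apply/existsP; exists x; rewrite xe xC connect0.
have clS : forall x y, x \in S -> y \in eta -> adj D x y -> y \in S.
  move=> x y; rewrite inE => /existsP[c /and3P[ce cC cx]] ye axy.
  rewrite inE; apply/existsP; exists c; rewrite ce cC.
  have : y \in G c by apply: (clG c x y ce) => //; rewrite inE.
  by rewrite inE.
have hS : syn D S = set0.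
  apply/setP => t; rewrite in_set0 /syn in_set.
  case: (pickP [pred x | (x \in S) && D x t]) => [e /andP[eS De] | none].
    rewrite (closed_par Ssub clS eS De).
    move: (eS); rewrite inE => /existsP[c /and3P[ce cC cx]].
    have eG : e \in G c by rewrite inE.
    rewrite -(closed_par (Gsub c ce) (fun x y => clG c x y ce) eG De).
    have : t \notin syn D (G c) by rewrite hG // inE.
    by move/negbTE; rewrite /syn in_set.
  have -> : [set x in S | D x t] = set0.
    by apply/setP => x; rewrite in_set in_set0; exact: none x.
  by rewrite cards0.
clearbody S.
have msub : symd mu S \subset C i :|: B i.
  apply/subsetP => x; rewrite in_symd.
  move: (subsetP Hmu x) (subsetP etasub x) (subsetP Ssub x).
  by case: (x \in mu); case: (x \in S); case: (x \in eta) => // _ _ /(_ isT).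
have mV : synV D C B i (symd mu S) = s.
  rewrite synV_symd HsVmu /synV hS set0I; apply/setP => t.
  by rewrite in_symd in_set0 addbF.
have mmin := Hmin _ msub mV.
exists (symd K (mu :&: C i)), (symd (symd rho (mu :&: C i)) S); split.
- by rewrite /= Hk -/s Hdec.
- have -> : past C i.+1 = past C i :|: C i by rewrite /past big_ord_recr.
  apply/disjP => x; rewrite !in_symd !inE.
  move: (rP x) (CPx x) (BPx x) (SC x) (subsetP Ssub x) (subsetP Hmu x) (CBx x).
  rewrite heta !inE.
  by case: (x \in rho); case: (x \in C i); case: (x \in B i); case: (x \in past C i);
     case: (x \in mu); case: (x \in S) => //= g1 g2 g3 g4 g5 g6 g7;
     intuition.
- rewrite !syn_symd hS Hsyn syn_symd; apply/setP => t; rewrite !in_symd in_set0.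
  by case: (t \in syn D K); case: (t \in syn D eps); case: (t \in syn D (mu :&: C i)).
- have h1 := card_symd_le K (mu :&: C i).
  suff : #|mu :&: C i| + #|symd (symd rho (mu :&: C i)) S| + #|symd mu S| <= #|rho| + #|mu|
    by lia.
  rewrite !card_sumE -!big_split /=; apply: leq_sum => x _.
  move: (rP x) (CPx x) (BPx x) (SC x) (subsetP Ssub x) (subsetP Hmu x) (CBx x).
  rewrite !in_symd heta !inE.
  by case: (x \in rho); case: (x \in C i); case: (x \in B i); case: (x \in past C i);
     case: (x \in mu); case: (x \in S) => //= g1 g2 g3 g4 g5 g6 g7;
     intuition.
Qed.

Theorem mainTheorem1 (E Sig M : finType) (D : E -> Sig -> bool)
  (L : E -> M -> bool) (d n : nat) (C B : nat -> {set E})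
  (dec : nat -> {set Sig} -> option {set E}) :
  is_fault_distance D L d ->
  (* C 0, ..., C (n-1) partition E *)
  (forall i j, i < n -> j < n -> i != j -> [disjoint C i & C j]) ->
  (forall e : E, exists2 i, i < n & e \in C i) ->
  (* buffers *)
  (forall i, i < n -> [disjoint B i & past C i :|: C i]) ->
  (* local decoder contract *)
  (forall i s, i < n ->
     match dec i s with
     | Some mu => mu \subset C i :|: B i /\ synV D C B i mu = s
     | None => ~ (exists mu : {set E}, mu \subset C i :|: B i /\ synV D C B i mu = s)
     end) ->
  (* 1. local decoder soundness *)
  (forall (eps : {set E}) i K, i < n -> kapP D C B dec eps i = Some K ->
     let s := synV D C B i (symd K eps) in
     (exists2 eta : {set E}, eta \subset C i :|: B i & 2 * #|eta| < d /\ synV D C B i eta = s) ->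
     exists mu : {set E}, [/\ dec i s = Some mu, mu \subset C i :|: B i,
                    synV D C B i mu = s &
                    forall mu' : {set E}, mu' \subset C i :|: B i -> synV D C B i mu' = s ->
                                #|mu| <= #|mu'|]) ->
  (* 2. buffering condition *)
  (forall i, i < n -> forall eta : {set E},
     connected_err D eta -> eta \subset C i :|: B i -> synV D C B i eta = set0 ->
     eta :&: C i != set0 -> syn D eta != set0 -> d <= #|eta|) ->
  forall eps : {set E}, 2 * #|eps| < d ->
  exists kappa : {set E}, [/\ kapP D C B dec eps n = Some kappa,
     syn D kappa = syn D eps, #|kappa| <= #|eps|,
     (forall kappa' : {set E}, syn D kappa' = syn D eps -> #|kappa| <= #|kappa'|) &
     logeff L kappa = logeff L eps].
Proof.
move=> [_ hfd] disjC cover disjB _ hsound hbuf.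
have inv := invariant disjC disjB hsound hbuf.
have pastT : forall x, x \in past C n.
  move=> x; have [i hi xi] := cover x.
  by apply/bigcupP; exists (Ordinal hi).
have fin : forall eps : {set E}, 2 * #|eps| < d -> exists K : {set E},
    [/\ kapP D C B dec eps n = Some K, syn D K = syn D eps & #|K| <= #|eps|].
  move=> eps heps; have [K [rho [Hk Hd Hs Hc]]] := inv eps heps n (leqnn n).
  have r0 : rho = set0.
    apply/setP => x; rewrite in_set0; apply/negP => xr.
    by move/disjP: Hd => /(_ x xr (pastT x)).
  exists K; split => //; last by lia.
  apply/setP => t; move/setP: Hs => /(_ t).
  rewrite r0 syn0 in_set0 syn_symd in_symd.
  by case: (t \in syn D K); case: (t \in syn D eps).
move=> eps heps; have [K [Hk Hs Hc]] := fin eps heps.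
exists K; split => //.
- move=> k' hk'; case: (ltnP (2 * #|k'|) d) => h.
    have [K' [Hk' _ Hc']] := fin k' h.
    move: Hk'; rewrite (kapP_syn C B dec n hk') Hk => -[->] //.
  lia.
- have h0 : syn D (symd K eps) = set0.
    by rewrite syn_symd Hs; apply/setP => t; rewrite in_symd addbb inE.
  have hl : logeff L (symd K eps) = set0.
    case: (eqVneq (logeff L (symd K eps)) set0) => // hne.
    have := hfd _ h0 hne; have := card_symd_le K eps; lia.
  apply/setP => m; move/setP: hl => /(_ m).
  rewrite logeff_symd in_symd in_set0.
  by case: (m \in logeff L K); case: (m \in logeff L eps).
Qed.
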